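(* Let $f\in C_{\mathbb{R}}[0,1]$ and $u\in(0,1]$ be such that $P_{f,u}\neq0$. Then $\limsup_{\rho\to+\infty}|\Phi_{f,u}(\rho)|=+\infty$. In particular, there is a sequence $\{\rho_k\}_{k\ge1}$ of positive numbers with $\rho_k\to+\infty$ such that $\{|\Phi_{f,u}(\rho_k)|\}_{k\ge1}$ is increasing and $|\Phi_{f,u}(\rho_k)|\to+\infty$.
   Context: $C_{\mathbb{R}}[0,1]$ denotes the real-valued continuous functions on $[0,1]$. For $f\in C[0,1]$ and $u\in(0,1]$, $\Phi_{f,u}(z)=\int_0^u f(s)e^{(u-s)z}\,ds$ ($z\in\mathbb{C}$), an entire function, and $P_{f,u}=\max\{|f(s)|:0\le s\le u\}$. *)

(* Defs.v *)
From Stdlib Require Import Reals.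
From Coquelicot Require Import Coquelicot.
Open Scope R_scope.

Definition cont_on_01 (f : R -> R) : Prop :=
  forall x, 0 <= x <= 1 ->
    filterlim f (within (fun y => 0 <= y <= 1) (locally x)) (locally (f x)).

Definition Phi (f : R -> R) (u rho : R) : R :=
  RInt (fun s => f s * exp ((u - s) * rho)) 0 u.

Definition P (f : R -> R) (u : R) : R :=
  real (Lub_Rbar (fun y => exists s, 0 <= s <= u /\ y = Rabs (f s))).

(* limsup_{x -> +oo} g x = +oo, i.e. inf_N sup_{x > N} g x = +oo,
   i.e. every tail supremum is +oo. *)
Definition limsup_pinfty_is_pinfty (g : R -> R) : Prop :=
  forall N : R, Lub_Rbar (fun y => exists x, N < x /\ y = g x) = p_infty.

(* Main.v *)
Require Import Defs.
From Stdlib Require Import Reals Lra Lia ClassicalEpsilon Classical.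
From Coquelicot Require Import Coquelicot.
Open Scope R_scope.

Lemma pow_exp : forall x n, exp x ^ n = exp (INR n * x).
Proof.
  intros x n; induction n as [|n IH].
  - simpl. rewrite Rmult_0_l, exp_0; reflexivity.
  - rewrite S_INR, <- tech_pow_Rmult, IH, <- exp_plus; f_equal; ring.
Qed.

Lemma cmul (f g : R -> R) x : continuous f x -> continuous g x -> continuous (fun y => f y * g y) x.
Proof. intros; apply (continuous_mult f g x); auto. Qed.

Lemma cminus (f g : R -> R) x : continuous f x -> continuous g x -> continuous (fun y => f y - g y) x.
Proof. intros; apply (continuous_minus f g x); auto. Qed.

Lemma cont_RInt (g : R -> R) a b : (forall x, continuous g x) -> ex_RInt g a b.
Proof. intros; apply (@ex_RInt_continuous R_CompleteNormedModule); auto. Qed.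

Lemma RInt_scal_R (g : R -> R) a b c : ex_RInt g a b -> RInt (fun s => c * g s) a b = c * RInt g a b.
Proof. intros; apply (RInt_scal g a b c); auto. Qed.

Lemma RInt_minus_R (f g : R -> R) a b : ex_RInt f a b -> ex_RInt g a b ->
  RInt (fun s => f s - g s) a b = RInt f a b - RInt g a b.
Proof. intros; apply (RInt_minus f g a b); auto. Qed.

Lemma Chasles_R (g : R -> R) a b c : ex_RInt g a b -> ex_RInt g b c ->
  RInt g a b + RInt g b c = RInt g a c.
Proof. intros; apply (RInt_Chasles g a b c); auto. Qed.

Lemma RInt_sum (g : nat -> R -> R) a b n : (forall i, forall x, continuous (g i) x) ->
  RInt (fun s => sum_f_R0 (fun i => g i s) n) a b = sum_f_R0 (fun i => RInt (g i) a b) n.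
Proof.
  intros Hc. induction n as [|n IH].
  - simpl. reflexivity.
  - simpl. rewrite <- IH.
    assert (Hs : forall k x, continuous (fun s => sum_f_R0 (fun i => g i s) k) x).
    { intros k x; induction k as [|k IHk]; simpl; auto.
      apply (continuous_plus (fun s => sum_f_R0 (fun i => g i s) k) (g (S k)) x); auto. }
    apply (RInt_plus (fun s => sum_f_R0 (fun i => g i s) n) (g (S n)) a b);
    apply cont_RInt; auto.
Qed.

Lemma bernoulli x m : 0 <= x <= 1 -> 1 - INR m * x <= (1 - x) ^ m.
Proof.
  intros Hx; induction m as [|m IH].
  - simpl; lra.
  - rewrite S_INR; simpl.
    assert (0 <= (1-x)^m) by (apply pow_le; lra).
    assert (0 <= INR m) by apply pos_INR.
    nra.
Qed.

Lemma C_nonneg m i : 0 <= Binomial.C m i.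
Proof.
  unfold Binomial.C. apply Rle_mult_inv_pos. apply pos_INR.
  apply Rmult_lt_0_compat; apply INR_fact_lt_0.
Qed.

Lemma binom_bound (F : nat -> R) (M lam : R) (m : nat) : (0 < m)%nat -> 0 <= lam -> 0 <= M ->
  (forall i, Rabs (F (S i)) <= M) ->
  Rabs (sum_f_R0 (fun i => Binomial.C m i * (- lam) ^ i * F i) m - F 0%nat) <= M * ((1 + lam) ^ m - 1).
Proof.
  intros Hm Hl HM HF.
  rewrite (decomp_sum _ m) by auto. rewrite (Rplus_comm 1 lam), binomial, (decomp_sum _ m) by auto.
  simpl (Binomial.C m 0 * _). rewrite C_n_0. simpl (_ ^ 0).
  replace (1 * 1 * F 0%nat + sum_f_R0 (fun i : nat => Binomial.C m (S i) * (- lam) ^ S i * F (S i)) (Init.Nat.pred m) - F 0%nat)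
    with (sum_f_R0 (fun i : nat => Binomial.C m (S i) * (- lam) ^ S i * F (S i)) (Init.Nat.pred m)) by ring.
  apply Rle_trans with (M * sum_f_R0 (fun i : nat => Binomial.C m (S i) * lam ^ S i * 1 ^ (m - S i)) (Init.Nat.pred m)).
  2:{ right. rewrite !pow1. ring. }
  eapply Rle_trans. apply sum_f_R0_triangle.
  rewrite scal_sum.
  apply sum_Rle. intros i _.
  rewrite pow1, !Rabs_mult, <- RPow_abs, Rabs_Ropp, (Rabs_right lam) by lra.
  rewrite (Rabs_right (Binomial.C _ _)) by (apply Rle_ge, C_nonneg).
  assert (0 <= Binomial.C m (S i)) by apply C_nonneg.
  assert (0 <= lam ^ S i) by (apply pow_le; lra).
  specialize (HF i). rewrite Rmult_1_r. apply Rmult_le_compat_l; [apply Rmult_le_pos|]; auto.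
Qed.

Lemma cont_der (f : R -> R) x : ex_derive f x -> continuous f x.
Proof. intros; apply (@ex_derive_continuous R_AbsRing R_NormedModule); auto. Qed.

Lemma exp_inv_bound y : 0 < y -> exp (- y) <= 1 / y.
Proof.
  intros Hy. rewrite exp_Ropp. assert (H := exp_ineq1_le y).
  unfold Rdiv; rewrite Rmult_1_l. apply Rinv_le_contravar; lra.
Qed.

Lemma expm1_bound z : 0 <= z <= 1/2 -> exp z - 1 <= 2 * z.
Proof.
  intros Hz. assert (H := exp_ineq1_le (- z)).
  assert (He : exp z * exp (- z) = 1) by (rewrite <- exp_plus, Rplus_opp_r, exp_0; auto).
  assert (0 < exp z) by apply exp_pos.
  nra.
Qed.

Lemma exp_le_mono x y : x <= y -> exp x <= exp y.
Proof. intros [H|H]. left; apply exp_increasing; auto. subst; lra. Qed.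

Lemma q_bounds rho s m : 0 < rho -> 0 <= s -> 0 <= (1 - exp (- rho * s)) ^ m <= 1.
Proof.
  intros Hr Hs. assert (0 < exp (- rho * s)) by apply exp_pos.
  assert (exp (- rho * s) <= 1).
  { rewrite <- exp_0. apply exp_le_mono. nra. }
  split. apply pow_le; lra. apply Rle_trans with (1 ^ m); [apply pow_incr; lra | rewrite pow1; lra].
Qed.

Lemma q_left rho s m a d : 0 < rho -> 0 <= s -> 0 < d -> INR m = exp (rho * a) -> s <= a - d ->
  (1 - exp (- rho * s)) ^ m <= 1 / (rho * d).
Proof.
  intros Hr Hs Hd Hm Hsa.
  assert (H1 : (1 - exp (- rho * s)) ^ m <= exp (- exp (- rho * s)) ^ m).
  { apply pow_incr. split.
    - assert (exp (- rho * s) <= 1) by (rewrite <- exp_0; apply exp_le_mono; nra). lra.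
    - pose proof (exp_ineq1_le (- exp (- rho * s))). lra. }
  rewrite pow_exp, Hm in H1.
  replace (exp (rho * a) * - exp (- rho * s)) with (- exp (rho * (a - s))) in H1
    by (rewrite <- Ropp_mult_distr_r, <- exp_plus; f_equal; f_equal; ring).
  assert (H2 : exp (- exp (rho * (a - s))) <= 1 / exp (rho * (a - s))) by (apply exp_inv_bound, exp_pos).
  assert (H3 : 1 + rho * (a - s) <= exp (rho * (a - s))) by apply exp_ineq1_le.
  assert (H4 : 1 / exp (rho * (a - s)) <= 1 / (rho * d)).
  { unfold Rdiv; rewrite !Rmult_1_l. apply Rinv_le_contravar. nra. nra. }
  lra.
Qed.

Lemma q_right rho s m a d : 0 < rho -> 0 <= s -> 0 < d -> INR m = exp (rho * a) -> a + d <= s ->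
  1 - (1 - exp (- rho * s)) ^ m <= 1 / (rho * d).
Proof.
  intros Hr Hs Hd Hm Hsa.
  assert (exp (- rho * s) <= 1) by (rewrite <- exp_0; apply exp_le_mono; nra).
  assert (0 < exp (- rho * s)) by apply exp_pos.
  assert (H1 := bernoulli (exp (- rho * s)) m (conj (Rlt_le _ _ H0) H)).
  rewrite Hm in H1.
  replace (exp (rho * a) * exp (- rho * s)) with (exp (- (rho * (s - a)))) in H1
    by (rewrite <- exp_plus; f_equal; ring).
  assert (H2 : exp (- (rho * (s - a))) <= 1 / (rho * (s - a))) by (apply exp_inv_bound; nra).
  assert (H4 : 1 / (rho * (s - a)) <= 1 / (rho * d)).
  { unfold Rdiv; rewrite !Rmult_1_l. apply Rinv_le_contravar. nra. nra. }
  lra.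
Qed.

Lemma div_lt_lem Y rho I : 0 < rho -> 0 <= Y -> 4 * Y < rho * I -> Y / rho < I / 4.
Proof.
  intros Hr HY H. apply (Rmult_lt_reg_r (4 * rho)). lra.
  replace (Y / rho * (4 * rho)) with (4 * Y) by (field; lra).
  replace (I / 4 * (4 * rho)) with (rho * I) by field. lra.
Qed.

Lemma key (h : R -> R) (u a B N M : R) :
  (forall x, continuous h x) -> 0 < a < u -> 0 < B -> (forall s, 0 <= s <= u -> Rabs (h s) <= B) ->
  (forall rho, N < rho -> Rabs (RInt (fun s => h s * exp ((u - s) * rho)) 0 u) <= M) ->
  RInt h 0 a = 0.
Proof.
  intros Hh Ha HB HhB HPhi.
  destruct (Req_dec (RInt h 0 a) 0) as [E|Hne]; auto; exfalso.
  set (I := Rabs (RInt h 0 a)).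
  assert (HI : 0 < I) by (apply Rabs_pos_lt; auto).
  set (M' := Rmax M 0).
  assert (HM' : 0 <= M') by apply Rmax_r.
  assert (HPhi' : forall rho, N < rho -> Rabs (RInt (fun s => h s * exp ((u - s) * rho)) 0 u) <= M').
  { intros; eapply Rle_trans; [apply HPhi; auto | apply Rmax_l]. }
  set (d := Rmin (I / (8 * B)) (Rmin (a / 2) ((u - a) / 2))).
  assert (Hd1 : d <= I / (8 * B)) by apply Rmin_l.
  assert (Hd2 : d <= a / 2) by (eapply Rle_trans; [apply Rmin_r | apply Rmin_l]).
  assert (Hd3 : d <= (u - a) / 2) by (eapply Rle_trans; [apply Rmin_r | apply Rmin_r]).
  assert (Hd0 : 0 < d).
  { apply Rmin_glb_lt. apply Rdiv_lt_0_compat; lra. apply Rmin_glb_lt; lra. }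
  set (X := 2 * M' / (u - a)).
  set (Y := B * u / d).
  assert (HX : 0 <= X) by (unfold X; apply Rle_mult_inv_pos; lra).
  assert (HY : 0 <= Y) by (unfold Y; apply Rle_mult_inv_pos; nra).
  set (T := 1 + Rabs N + 2 / (u - a) + 4 * (X + Y) / I).
  assert (HT1 : 0 <= 2 / (u - a)) by (apply Rle_mult_inv_pos; lra).
  assert (HT2 : 0 <= 4 * (X + Y) / I) by (apply Rle_mult_inv_pos; lra).
  assert (HN := Rle_abs N). assert (HN0 := Rabs_pos N).
  destruct (INR_unbounded (exp (a * T))) as [m Hm].
  assert (Hmpos : (0 < m)%nat).
  { destruct m. simpl in Hm. pose proof (exp_pos (a * T)). lra. lia. }
  assert (HmR : 0 < INR m) by (apply lt_0_INR; auto).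
  set (rho := ln (INR m) / a).
  assert (Hra : rho * a = ln (INR m)) by (unfold rho; field; lra).
  assert (HmE : INR m = exp (rho * a)) by (rewrite Hra, exp_ln; auto).
  assert (HrT : T < rho).
  { assert (a * T < ln (INR m)).
    { rewrite <- (ln_exp (a * T)). apply ln_increasing; auto. apply exp_pos. }
    apply (Rmult_lt_reg_l a). lra. rewrite (Rmult_comm a rho), Hra. exact H. }
  unfold T in HrT. assert (Hr0 : 0 < rho) by lra.
  assert (HrN : N < rho) by lra.
  assert (Hr2 : 2 / (u - a) < rho) by lra.
  assert (Hr3 : 4 * (X + Y) / I < rho) by lra.
  assert (Hr3' : 4 * (X + Y) < rho * I).
  { apply (Rmult_lt_compat_r I) in Hr3; auto.
    replace (4 * (X + Y) / I * I) with (4 * (X + Y)) in Hr3 by (field; lra). lra. }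
  set (q := fun s => (1 - exp (- rho * s)) ^ m).
  set (lam := exp (- rho * u)).
  set (Phi := fun r => RInt (fun s => h s * exp ((u - s) * r)) 0 u).
  assert (Hcq : forall x, continuous q x).
  { intros x; apply cont_der; unfold q; auto_derive; auto. }
  assert (Hce : forall r x, continuous (fun s => exp ((u - s) * r)) x).
  { intros r x; apply cont_der; auto_derive; auto. }
  assert (Hchq : forall x, continuous (fun s => h s * q s) x).
  { intros; apply cmul; auto. }
  assert (Hchmq : forall x, continuous (fun s => h s - h s * q s) x).
  { intros; apply cminus; auto. }
  assert (Hexp : RInt (fun s => h s * q s) 0 u =
     sum_f_R0 (fun i => Binomial.C m i * (- lam) ^ i * Phi (INR i * rho)) m).
  { rewrite (RInt_ext _ (fun s => sum_f_R0 (fun i => Binomial.C m i * (- lam) ^ i *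
        (h s * exp ((u - s) * (INR i * rho)))) m)).
    2:{ intros s _. unfold q.
        replace (1 - exp (- rho * s)) with (- lam * exp ((u - s) * rho) + 1).
        2:{ unfold lam. rewrite <- Ropp_mult_distr_l, <- exp_plus. replace (- rho * u + (u - s) * rho) with (- rho * s) by ring. ring. }
        rewrite binomial, scal_sum. apply sum_eq. intros i _.
        rewrite pow1, Rpow_mult_distr, pow_exp.
        replace ((u - s) * (INR i * rho)) with (INR i * ((u - s) * rho)) by ring. ring. }
    rewrite RInt_sum.
    2:{ intros i x. apply cmul. apply continuous_const. apply cmul; auto. }
    apply sum_eq. intros i _. unfold Phi. apply RInt_scal_R. apply cont_RInt. intros; apply cmul; auto. }
  assert (HPhi0 : Phi (INR 0 * rho) = RInt h 0 u).
  { unfold Phi. apply RInt_ext. intros x _. simpl. rewrite Rmult_0_l, Rmult_0_r, exp_0. ring. }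
  assert (Hbb := binom_bound (fun i => Phi (INR i * rho)) M' lam m Hmpos).
  assert (Hlam : 0 < lam) by apply exp_pos.
  assert (Hml : INR m * lam <= 1 / (rho * (u - a))).
  { rewrite HmE. unfold lam. rewrite <- exp_plus.
    replace (rho * a + - rho * u) with (- (rho * (u - a))) by ring. apply exp_inv_bound. nra. }
  assert (Hra2 : 2 <= rho * (u - a)).
  { apply (Rmult_lt_compat_r (u - a)) in Hr2; [|lra].
    replace (2 / (u - a) * (u - a)) with 2 in Hr2 by (field; lra). lra. }
  assert (Hml2 : INR m * lam <= 1 / 2).
  { eapply Rle_trans. apply Hml. unfold Rdiv; rewrite !Rmult_1_l. apply Rinv_le_contravar; lra. }
  assert (Hpow : (1 + lam) ^ m <= exp (INR m * lam)).
  { rewrite <- pow_exp. apply pow_incr. pose proof (exp_ineq1_le lam). lra. }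
  assert (Hexpm := expm1_bound (INR m * lam)).
  assert (HE1 : Rabs (RInt (fun s => h s * q s) 0 u - RInt h 0 u) <= X / rho).
  { rewrite Hexp, <- HPhi0. eapply Rle_trans. apply Hbb; [lra | auto | ].
    - intros i. apply HPhi'. rewrite S_INR. pose proof (pos_INR i). nra.
    - assert (M' * ((1 + lam) ^ m - 1) <= M' * (2 * (INR m * lam))).
      { apply Rmult_le_compat_l; auto. assert (0 <= INR m * lam) by nra. specialize (Hexpm (conj H Hml2)). lra. }
      eapply Rle_trans. apply H.
      replace (X / rho) with (M' * (2 * (1 / (rho * (u - a))))) by (unfold X; field; lra).
      apply Rmult_le_compat_l; auto. lra. }
  assert (HXr : X / rho < I / 4) by (apply div_lt_lem; auto; lra).
  assert (HYr : Y / rho < I / 4) by (apply div_lt_lem; auto; lra).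
  assert (Hex : forall g : R -> R, (forall x, continuous g x) -> forall c e, ex_RInt g c e).
  { intros; apply cont_RInt; auto. }
  assert (S1 : RInt h 0 a + RInt h a u = RInt h 0 u) by (apply Chasles_R; apply Hex; auto).
  assert (S2 : RInt (fun s => h s * q s) 0 a + RInt (fun s => h s * q s) a u = RInt (fun s => h s * q s) 0 u)
    by (apply Chasles_R; apply Hex; auto).
  assert (S3 : RInt (fun s => h s * q s) 0 (a - d) + RInt (fun s => h s * q s) (a - d) a = RInt (fun s => h s * q s) 0 a)
    by (apply Chasles_R; apply Hex; auto).
  assert (S4 : RInt (fun s => h s - h s * q s) a (a + d) + RInt (fun s => h s - h s * q s) (a + d) u
     = RInt (fun s => h s - h s * q s) a u) by (apply Chasles_R; apply Hex; auto).
  assert (S5 : RInt (fun s => h s - h s * q s) a u = RInt h a u - RInt (fun s => h s * q s) a u)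
    by (apply RInt_minus_R; apply Hex; auto).
  assert (Hqb : forall s, 0 <= s -> 0 <= q s <= 1) by (intros; apply q_bounds; auto).
  assert (B1 : Rabs (RInt (fun s => h s * q s) 0 (a - d)) <= (a - d - 0) * (B * (1 / (rho * d)))).
  { apply abs_RInt_le_const. lra. apply Hex; auto. intros t Ht.
    rewrite Rabs_mult, (Rabs_right (q t)) by (apply Rle_ge, Hqb; lra).
    apply Rmult_le_compat. apply Rabs_pos. apply Hqb; lra. apply HhB; lra.
    apply q_left with a; auto; lra. }
  assert (B2 : Rabs (RInt (fun s => h s * q s) (a - d) a) <= (a - (a - d)) * (B * 1)).
  { apply abs_RInt_le_const. lra. apply Hex; auto. intros t Ht.
    rewrite Rabs_mult, (Rabs_right (q t)) by (apply Rle_ge, Hqb; lra).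
    apply Rmult_le_compat. apply Rabs_pos. apply Hqb; lra. apply HhB; lra. apply Hqb; lra. }
  assert (B3 : Rabs (RInt (fun s => h s - h s * q s) a (a + d)) <= (a + d - a) * (B * 1)).
  { apply abs_RInt_le_const. lra. apply Hex; auto. intros t Ht.
    replace (h t - h t * q t) with (h t * (1 - q t)) by ring.
    assert (0 <= q t <= 1) by (apply Hqb; lra).
    rewrite Rabs_mult, (Rabs_right (1 - q t)) by lra.
    apply Rmult_le_compat. apply Rabs_pos. lra. apply HhB; lra. lra. }
  assert (B4 : Rabs (RInt (fun s => h s - h s * q s) (a + d) u) <= (u - (a + d)) * (B * (1 / (rho * d)))).
  { apply abs_RInt_le_const. lra. apply Hex; auto. intros t Ht.
    replace (h t - h t * q t) with (h t * (1 - q t)) by ring.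
    assert (0 <= q t <= 1) by (apply Hqb; lra).
    rewrite Rabs_mult, (Rabs_right (1 - q t)) by lra.
    apply Rmult_le_compat. apply Rabs_pos. lra. apply HhB; lra.
    apply q_right with a; auto; lra. }
  assert (Hsum : (a - d - 0) * (B * (1 / (rho * d))) + (u - (a + d)) * (B * (1 / (rho * d))) <= Y / rho).
  { replace (Y / rho) with (u * (B * (1 / (rho * d)))) by (unfold Y; field; lra).
    assert (0 <= B * (1 / (rho * d))) by (apply Rmult_le_pos; [lra | apply Rle_mult_inv_pos; nra]).
    nra. }
  assert (HdB : d * B <= I / 8).
  { apply (Rmult_le_compat_r B) in Hd1; [|lra].
    replace (I / (8 * B) * B) with (I / 8) in Hd1 by (field; lra). lra. }
  assert (HIeq : RInt h 0 a = - (RInt (fun s => h s * q s) 0 u - RInt h 0 u)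
      + (RInt (fun s => h s * q s) 0 (a - d) + RInt (fun s => h s * q s) (a - d) a)
      - (RInt (fun s => h s - h s * q s) a (a + d) + RInt (fun s => h s - h s * q s) (a + d) u)).
  { rewrite S4, S5, S3. lra. }
  assert (I <= X / rho + ((a - d - 0) * (B * (1 / (rho * d))) + (a - (a - d)) * (B * 1))
             + ((a + d - a) * (B * 1) + (u - (a + d)) * (B * (1 / (rho * d))))).
  { unfold I. rewrite HIeq.
    eapply Rle_trans. apply Rabs_triang. rewrite Rabs_Ropp.
    eapply Rle_trans. apply Rplus_le_compat_r. apply Rabs_triang. rewrite Rabs_Ropp.
    apply Rplus_le_compat. apply Rplus_le_compat. auto.
    eapply Rle_trans. apply Rabs_triang. lra.
    eapply Rle_trans. apply Rabs_triang. lra. }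
  lra.
Qed.

Lemma ball_R x e y : ball x e y <-> Rabs (y - x) < e.
Proof. reflexivity. Qed.

Lemma cl_lip u x y : 0 <= u -> Rabs (Rmax 0 (Rmin u x) - Rmax 0 (Rmin u y)) <= Rabs (x - y).
Proof.
  intros Hu. unfold Rmax, Rmin.
  repeat (destruct Rle_dec); unfold Rabs; repeat (destruct Rcase_abs); lra.
Qed.

Lemma h_cont f u : cont_on_01 f -> 0 < u <= 1 -> forall x, continuous (fun y => f (Rmax 0 (Rmin u y))) x.
Proof.
  intros Hf Hu x. unfold continuous.
  assert (Hcl : forall y, 0 <= Rmax 0 (Rmin u y) <= 1).
  { intros y. unfold Rmax, Rmin. repeat (destruct Rle_dec); lra. }
  apply filterlim_comp with (G := within (fun y => 0 <= y <= 1) (locally (Rmax 0 (Rmin u x)))).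
  - intros P [eps HP]. exists eps. intros y Hy. apply HP.
    + rewrite ball_R in *. eapply Rle_lt_trans. apply cl_lip; lra. auto.
    + apply Hcl.
  - apply Hf. apply Hcl.
Qed.

Lemma nz_contra (h : R -> R) u s0 : (forall x, continuous h x) -> 0 < u -> 0 <= s0 <= u -> h s0 <> 0 ->
  (forall a, 0 < a < u -> RInt h 0 a = 0) -> False.
Proof.
  intros Hh Hu Hs0 Hne Hz.
  assert (Heps : 0 < Rabs (h s0) / 2) by (apply Rdiv_lt_0_compat; [apply Rabs_pos_lt; auto | lra]).
  destruct (proj1 (filterlim_locally h (h s0)) (Hh s0) (mkposreal _ Heps)) as [del Hdel].
  simpl in Hdel.
  assert (Hdp := cond_pos del).
  set (lo := Rmax (s0 - del) 0). set (hi := Rmin (s0 + del) u).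
  assert (Hlo1 : s0 - del <= lo) by apply Rmax_l.
  assert (Hlo2 : 0 <= lo) by apply Rmax_r.
  assert (Hhi1 : hi <= s0 + del) by apply Rmin_l.
  assert (Hhi2 : hi <= u) by apply Rmin_r.
  assert (Hlh : lo < hi).
  { apply Rmax_lub_lt; apply Rmin_glb_lt; lra. }
  set (a := lo + (hi - lo) / 3). set (b := lo + 2 * (hi - lo) / 3).
  assert (Hab : 0 < a < b /\ b < u) by (unfold a, b; lra).
  assert (Hpt : forall t, a <= t <= b -> Rabs (h t - h s0) < Rabs (h s0) / 2).
  { intros t Ht. apply (Hdel t). rewrite ball_R. unfold a, b in Ht. unfold Rabs; destruct Rcase_abs; lra. }
  assert (Hex : forall c e, ex_RInt h c e) by (intros; apply cont_RInt; auto).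
  assert (HI : RInt h a b = 0).
  { pose proof (Chasles_R h 0 a b (Hex _ _) (Hex _ _)) as HC. rewrite (Hz a), (Hz b) in HC by lra. lra. }
  destruct (Rlt_or_le 0 (h s0)) as [Hp|Hn].
  - assert (RInt (fun _ => h s0 / 2) a b <= RInt h a b).
    { apply RInt_le. lra. apply ex_RInt_const. auto. intros t Ht.
      specialize (Hpt t (conj (Rlt_le _ _ (proj1 Ht)) (Rlt_le _ _ (proj2 Ht)))).
      rewrite (Rabs_right (h s0)) in Hpt by lra. unfold Rabs in Hpt; destruct Rcase_abs in Hpt; lra. }
    rewrite RInt_const in H. change (scal (b - a) (h s0 / 2)) with ((b - a) * (h s0 / 2)) in H.
    nra.
  - assert (Hn' : h s0 < 0) by lra.
    assert (RInt h a b <= RInt (fun _ => h s0 / 2) a b).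
    { apply RInt_le. lra. auto. apply ex_RInt_const. intros t Ht.
      specialize (Hpt t (conj (Rlt_le _ _ (proj1 Ht)) (Rlt_le _ _ (proj2 Ht)))).
      rewrite (Rabs_left (h s0)) in Hpt by lra. unfold Rabs in Hpt; destruct Rcase_abs in Hpt; lra. }
    rewrite RInt_const in H. change (scal (b - a) (h s0 / 2)) with ((b - a) * (h s0 / 2)) in H.
    nra.
Qed.

Theorem lemma4p4 (f : R -> R) (u : R) :
  cont_on_01 f -> 0 < u <= 1 -> P f u <> 0 ->
  limsup_pinfty_is_pinfty (fun rho => Rabs (Phi f u rho)) /\
  exists rho_ : nat -> R,
    (forall k, 0 < rho_ k) /\
    is_lim_seq rho_ p_infty /\
    (forall k, Rabs (Phi f u (rho_ k)) < Rabs (Phi f u (rho_ (S k)))) /\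
    is_lim_seq (fun k => Rabs (Phi f u (rho_ k))) p_infty.
Proof.
  intros Hf Hu HP.
  set (h := fun y => f (Rmax 0 (Rmin u y))).
  assert (Hh : forall x, continuous h x) by (apply h_cont; auto).
  assert (Hhf : forall s, 0 <= s <= u -> h s = f s).
  { intros s Hs. unfold h. rewrite Rmin_right by lra. rewrite Rmax_right by lra. auto. }
  assert (HPhi : forall r, Phi f u r = RInt (fun s => h s * exp ((u - s) * r)) 0 u).
  { intros r. unfold Phi. apply RInt_ext. intros x Hx.
    rewrite Rmin_left in Hx by lra. rewrite Rmax_right in Hx by lra. rewrite Hhf by lra. auto. }
  destruct (continuity_ab_maj (fun x => Rabs (h x)) 0 u) as [Mx [HMx _]].
  { lra. }
  { intros c _. apply continuity_pt_filterlim. apply (continuous_Rabs_comp h). apply Hh. }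
  set (B := Rabs (h Mx) + 1).
  assert (HB : 0 < B) by (unfold B; pose proof (Rabs_pos (h Mx)); lra).
  assert (HhB : forall s, 0 <= s <= u -> Rabs (h s) <= B).
  { intros s Hs. specialize (HMx s Hs). simpl in HMx. unfold B; lra. }
  assert (Hs0 : exists s0, 0 <= s0 <= u /\ f s0 <> 0).
  { apply NNPP. intros Hno. apply HP.
    set (E := fun y => exists s, 0 <= s <= u /\ y = Rabs (f s)).
    assert (HE : forall y, E y -> y = 0).
    { intros y [s [Hs Hy]]. destruct (Req_dec (f s) 0) as [Z|Z].
      rewrite Hy, Z, Rabs_R0; auto. exfalso; apply Hno; exists s; auto. }
    unfold P. fold E.
    destruct (Lub_Rbar_correct E) as [Hub Hlub].
    assert (E 0). { exists 0. split. lra. destruct (Req_dec (f 0) 0) as [Z|Z].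
      rewrite Z, Rabs_R0; auto. exfalso; apply Hno; exists 0; split; [lra|auto]. }
    assert (L1 : Rbar_le 0 (Lub_Rbar E)) by (apply Hub; auto).
    assert (L2 : Rbar_le (Lub_Rbar E) 0).
    { apply Hlub. intros y Hy. rewrite (HE y Hy). simpl; lra. }
    destruct (Lub_Rbar E); simpl in *; try contradiction; lra. }
  destruct Hs0 as [s0 [Hs0 Hfs0]].
  assert (U : forall N M0, exists r, N < r /\ M0 < Rabs (Phi f u r)).
  { intros N M0. apply NNPP. intros Hno.
    assert (Hb : forall r, N < r -> Rabs (RInt (fun s => h s * exp ((u - s) * r)) 0 u) <= M0).
    { intros r Hr. rewrite <- HPhi. apply Rnot_lt_le. intros Hc. apply Hno. exists r; auto. }
    apply (nz_contra h u s0); auto. lra. rewrite Hhf; auto.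
    intros a Ha. apply (key h u a B N M0); auto. }
  split.
  - intros N.
    set (E := fun y => exists x, N < x /\ y = Rabs (Phi f u x)).
    destruct (Lub_Rbar_correct E) as [Hub _].
    revert Hub. destruct (Lub_Rbar E) as [r| |]; intros Hub; auto.
    + exfalso. destruct (U N r) as [x [Hx1 Hx2]].
      assert (Rbar_le (Rabs (Phi f u x)) r) by (apply Hub; exists x; auto). simpl in H. lra.
    + exfalso. destruct (U N 0) as [x [Hx1 Hx2]].
      assert (Rbar_le (Rabs (Phi f u x)) m_infty) by (apply Hub; exists x; auto). simpl in H. auto.
  - assert (HG : forall N M0 : R, {r : R | N < r /\ M0 < Rabs (Phi f u r)}).
    { intros N M0. apply constructive_indefinite_description. apply U. }
    pose (G := fun N M0 => proj1_sig (HG N M0)).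
    assert (HG1 : forall N M0, N < G N M0 /\ M0 < Rabs (Phi f u (G N M0))).
    { intros; unfold G; apply (proj2_sig (HG N M0)). }
    pose (rho_ := fix r (k : nat) : R := match k with
                  | O => G 0 0
                  | S k' => G (INR (S k')) (Rmax (Rabs (Phi f u (r k'))) (INR (S k'))) end).
    assert (Hrs : forall k, rho_ (S k) = G (INR (S k)) (Rmax (Rabs (Phi f u (rho_ k))) (INR (S k)))) by reflexivity.
    assert (R1 : forall k, INR k <= rho_ k /\ 0 < rho_ k).
    { intros [|k].
      - change (rho_ 0%nat) with (G 0 0). destruct (HG1 0 0). simpl; split; lra.
      - rewrite Hrs.
        destruct (HG1 (INR (S k)) (Rmax (Rabs (Phi f u (rho_ k))) (INR (S k)))).
        pose proof (pos_INR (S k)). split; lra. }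
    assert (R2 : forall k, INR k <= Rabs (Phi f u (rho_ k)) /\
                  Rabs (Phi f u (rho_ k)) < Rabs (Phi f u (rho_ (S k)))).
    { intros k. rewrite Hrs.
      destruct (HG1 (INR (S k)) (Rmax (Rabs (Phi f u (rho_ k))) (INR (S k)))) as [_ H2].
      pose proof (Rmax_l (Rabs (Phi f u (rho_ k))) (INR (S k))).
      split; [|lra].
      destruct k as [|k].
      - simpl. apply Rabs_pos.
      - rewrite Hrs.
        destruct (HG1 (INR (S k)) (Rmax (Rabs (Phi f u (rho_ k))) (INR (S k)))) as [_ H3].
        pose proof (Rmax_r (Rabs (Phi f u (rho_ k))) (INR (S k))). lra. }
    exists rho_. split; [|split; [|split]].
    + intros k; apply R1.
    + apply is_lim_seq_le_p_loc with INR. exists O. intros n _. apply R1. apply is_lim_seq_INR.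
    + intros k; apply R2.
    + apply is_lim_seq_le_p_loc with INR. exists O. intros n _. apply R2. apply is_lim_seq_INR.
Qed.
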